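(* Fix $\eta\in[0,1]$ and an integer $N\ge1$, and consider the boosted BEHC$(N)$ driven by strategies as in the context. Let $i\ge N+1$, let $x^{i-1}$ be such that $x_{i-N}^{i-1}\ne\mathbf 0^{N}$, and let $\hat u^{i}\in\{a,b\}^{i}$ be such that $\hat u_l=b$ for some $l\in[k_{i-1}:i-1]$. Then $$P(x_i\mid \hat u^{i},x^{i-1})=P\big(x_i\mid \hat u_l^{i},\,q_{i-1}(x_{i-N}^{i-1})\big)$$ (for all $x_i$, whenever the conditioning events have positive probability).
   Context: $\bar\eta=1-\eta$, $[a:b]=\{a,\dots,b\}$, $x_j^{k}=(x_j,\dots,x_k)$. $\mathcal Q=[0:N]$, $g_U(q,1)=0$, $g_U(q,0)=q+1$ for $q\in[0:N-1]$, $g_U(N,0)=N$. BEHC battery law $P(S_i=0\mid x_i,s_{i-1})=\bar\eta\,\mathbb{1}\{x_i=s_{i-1}\}$ for $x_i\le s_{i-1}$; modified law $P_U(s_i\mid x_i,s_{i-1},q_{i-1})=\mathbb{1}\{s_i=1\}$ if $q_{i-1}\in\{N-1,N\}$ and $x_i=0$, otherwise the BEHC law. Strategies: $\hat u\in\{a,b\}$ with $f_a(s)=0$ and $f_b(s)=s$. The joint distribution of $(s_0^n,\hat u^n,x^n,q_0^n)$ is $$\mathbb{1}\{s_0=0,q_0=0\}\prod_{i=1}^{n}P(\hat u_i\mid\hat u^{i-1},x^{i-1})\,\mathbb{1}\{x_i=f_{\hat u_i}(s_{i-1})\}\,P_U(s_i\mid x_i,s_{i-1},q_{i-1})\,\mathbb{1}\{q_i=g_U(q_{i-1},x_i)\},$$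 where the conditionals $P(\hat u_i\mid\hat u^{i-1},x^{i-1})$ are arbitrary. For $i\ge N+1$, $q_{i-1}=q_{i-1}(x_{i-N}^{i-1})$ is the number of 0's following the last 1 in $x_{i-N}^{i-1}$ ($=N$ if all are 0), and $k_{i-1}=i-(q_{i-1}+1)$, i.e. $k_{i-1}$ is the index of the last 1 among $x_{i-N}^{i-1}$ if there is one, and $i-(N+1)$ otherwise. *)

(* Defs.v *)
From mathcomp Require Import all_boot all_order all_algebra.
Set Implicit Arguments. Unset Strict Implicit. Unset Printing Implicit Defensive.
Import Order.TTheory GRing.Theory Num.Theory.
Local Open Scope ring_scope.

(* Alphabets: x_i, s_i : bool (false = 0, true = 1);
   strategies u : bool with false = a, true = b;  q_i : 'I_(N.+1) = [0:N]. *)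

Definition gU (N q : nat) (x : bool) : nat :=
  if x then 0%N else if (q < N)%N then q.+1 else N.

Definition fstrat (u s : bool) : bool := if u then s else false.

Definition behc {R : pzRingType} (eta : R) (s x sp : bool) : R :=
  let p0 := (1 - eta) * (x == sp)%:R in if s then 1 - p0 else p0.

Definition PU {R : pzRingType} (eta : R) (N : nat) (s x sp : bool) (qp : nat) : R :=
  if ((qp == N.-1) || (qp == N)) && ~~ x then (s == true)%:R
  else behc eta s x sp.

(* policy: pol u^{k-1} x^{k-1} u_k = P(u_k | u^{k-1}, x^{k-1}) *)
Definition policy_ok {R : numDomainType} (pol : seq bool -> seq bool -> bool -> R) :=
  forall hu hx : seq bool,
    0 <= pol hu hx true /\ 0 <= pol hu hx false /\ pol hu hx true + pol hu hx false = 1.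

Section Joint.
Variables (R : realFieldType) (eta : R) (N : nat)
          (pol : seq bool -> seq bool -> bool -> R) (n : nat).

(* joint probability of (s_0^n, u^n, x^n, q_0^n);
   s, q are indexed 0..n, u, x are indexed 1..n (stored at position k-1) *)
Definition joint (s : (n.+1).-tuple bool) (u x : n.-tuple bool)
    (q : (n.+1).-tuple 'I_N.+1) : R :=
  let Sv k := nth false s k in
  let Uv k := nth false u k.-1 in
  let Xv k := nth false x k.-1 in
  let Qv k := nat_of_ord (nth ord0 q k) in
  ((Sv 0%N == false) && (Qv 0%N == 0%N))%:R *
  \prod_(1 <= k < n.+1)
     (pol (take k.-1 u) (take k.-1 x) (Uv k)
      * (Xv k == fstrat (Uv k) (Sv k.-1))%:R
      * PU eta N (Sv k) (Xv k) (Sv k.-1) (Qv k.-1)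
      * (Qv k == gU N (Qv k.-1) (Xv k))%:R).

Definition Pr (E : seq bool -> seq bool -> seq nat -> bool) : R :=
  \sum_(s : (n.+1).-tuple bool) \sum_(u : n.-tuple bool)
  \sum_(x : n.-tuple bool) \sum_(q : (n.+1).-tuple 'I_N.+1)
     joint s u x q * (E u x (map (@nat_of_ord _) q))%:R.

Definition condP (A B : seq bool -> seq bool -> seq nat -> bool) : R :=
  Pr (fun u x q => A u x q && B u x q) / Pr B.

End Joint.

(* x_{i-N}^{i-1} from x^{i-1} *)
Definition window (N i : nat) (xh : seq bool) : seq bool := drop (i.-1 - N) xh.

(* number of 0's following the last 1 in w (= N if all are 0, with size w = N) *)
Definition qwin (N : nat) (w : seq bool) : nat :=
  if has id w then find id (rev w) else N.

Definition kidx (N i : nat) (xh : seq bool) : nat :=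
  (i - (qwin N (window N i xh)).+1)%N.

Definition evXi (i : nat) (xi : bool) := fun (u x : seq bool) (q : seq nat) =>
  nth false x i.-1 == xi.
Definition evHist (uh xh : seq bool) := fun (u x : seq bool) (q : seq nat) =>
  (u == uh) && (take (size xh) x == xh).
Definition evTail (i l : nat) (uh : seq bool) (qv : nat) :=
  fun (u x : seq bool) (q : seq nat) =>
  (drop l.-1 u == drop l.-1 uh) && (nth 0%N q i.-1 == qv).

(* Main.v *)
Require Import Defs.
From mathcomp Require Import all_boot all_order all_algebra.
From mathcomp Require Import ring zify.
Import Order.TTheory GRing.Theory Num.Theory.
Local Open Scope ring_scope.

Lemma thead_head (T : Type) n (t : n.+1.-tuple T) x0 : thead t = head x0 t.
Proof. by rewrite /thead (tnth_nth x0); case: t => [[|y s] sz]. Qed.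

Lemma big_tuple_rcons (R : nmodType) (T : finType) m (G : m.+1.-tuple T -> R) :
  \sum_(t : m.+1.-tuple T) G t = \sum_(t : m.-tuple T) \sum_(a : T) G (rcons_tuple t a).
Proof.
rewrite pair_big /=.
pose h (p : m.-tuple T * T) := rcons_tuple p.1 p.2.
pose g (t : m.+1.-tuple T) : m.-tuple T * T :=
  (belast_tuple (thead t) (behead_tuple t), last (thead t) (behead t)).
rewrite (reindex h) /=.
  by apply: eq_bigr.
exists g => [[t a] _ | t _].
  rewrite /g /h /= (@thead_head _ _ _ a) /=; congr pair.
    apply: val_inj => /=.
    by case: t => [[|y s] sz] //=; rewrite belast_rcons.
  by case: t => [[|y s] sz] //=; rewrite last_rcons.
apply: val_inj; rewrite /g /h /=.
case: t => [[|x s] sz] //=.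
by rewrite (@thead_head _ _ _ x) /= -lastI.
Qed.

Lemma big_tuple0 (R : nmodType) (T : finType) (G : 0.-tuple T -> R) :
  \sum_(t : 0.-tuple T) G t = G [tuple].
Proof. by rewrite (big_pred1 [tuple]) // => t; rewrite [t]tuple0 /= eqxx. Qed.

Lemma sum_bool_pick (R : pzRingType) (s' : bool) (G : bool -> R) :
  \sum_(b : bool) (b == s')%:R * G b = G s'.
Proof. by rewrite big_bool; case: s' => /=; rewrite mul1r mul0r ?addr0 ?add0r. Qed.

Lemma sum_ord_pick (R : pzRingType) N (v : nat) (G : nat -> R) : (v < N.+1)%N ->
  \sum_(c : 'I_N.+1) (nat_of_ord c == v)%:R * G c = G v.
Proof.
move=> hv; rewrite (bigD1 (Ordinal hv)) //= eqxx mul1r big1 ?addr0 // => c hc.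
suff -> : (nat_of_ord c == v) = false by rewrite mul0r.
by apply/negbTE; apply: contra hc => /eqP h; apply/eqP/val_inj.
Qed.

Lemma nth_ord_map N (q : seq 'I_N.+1) k :
  nat_of_ord (nth ord0 q k) = nth 0%N (map (@nat_of_ord _) q) k.
Proof. by elim: q k => [|a q IH] [|k] //=. Qed.

Section Main.
Variables (R : realFieldType) (eta : R) (N : nat)
          (pol : seq bool -> seq bool -> bool -> R).

Definition Qlast (x : seq bool) : nat := foldl (gU N) 0%N x.

Definition stepf (n : nat) (u x : seq bool) (sp b : bool) (qp c : nat) : R :=
  pol (take n u) (take n x) (nth false u n)
  * (nth false x n == fstrat (nth false u n) sp)%:R
  * PU eta N b (nth false x n) sp qp
  * (c == gU N qp (nth false x n))%:R.

Definition jointS n (s u x : seq bool) (q : seq nat) : R :=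
  ((nth false s 0 == false) && (nth 0%N q 0 == 0%N))%:R *
  \prod_(1 <= k < n.+1) stepf k.-1 u x (nth false s k.-1) (nth false s k)
                          (nth 0%N q k.-1) (nth 0%N q k).

Lemma joint_jointS n s u x q :
  @joint R eta N pol n s u x q = jointS n s u x (map (@nat_of_ord _) q).
Proof.
rewrite /joint /jointS !nth_ord_map; congr (_ * _).
apply: eq_bigr => k _; rewrite /stepf !nth_ord_map.
by [].
Qed.

Fixpoint Afw (j : nat) (u x : seq bool) (s' : bool) : R :=
  match j with
  | 0 => (s' == false)%:R
  | j'.+1 => \sum_(s : bool) Afw j' u x s * pol (take j' u) (take j' x) (nth false u j')
        * (nth false x j' == fstrat (nth false u j') s)%:R
        * PU eta N s' (nth false x j') s (Qlast (take j' x))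
  end.


Lemma jointS_rcons n s0 b u x q0 c : size s0 = n.+1 -> size q0 = n.+1 ->
  jointS n.+1 (rcons s0 b) u x (rcons q0 c)
  = jointS n s0 u x q0 * stepf n u x (nth false s0 n) b (nth 0%N q0 n) c.
Proof.
move=> hs hq; rewrite /jointS big_nat_recr //= !nth_rcons hs hq /= -mulrA.
congr (_ * _); congr (_ * _).
  apply: eq_big_nat => k /andP[h1 h2].
  rewrite !nth_rcons hs hq h2 (leq_ltn_trans (leq_pred k) h2) //.
by rewrite !ltnn !eqxx leqnn.
Qed.


Lemma gU_lt q b : (gU N q b < N.+1)%N.
Proof. by rewrite /gU; case: b => //; case: ifP => h; rewrite ltnS. Qed.

Lemma natrA (a b : bool) : (a && b)%:R = a%:R * b%:R :> R.
Proof. by case: a; case: b; rewrite /= ?mul1r ?mul0r. Qed.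

Lemma jsum n (u x : seq bool) (s' : bool) (F : seq nat -> R) : (n <= size x)%N ->
 \sum_(s : n.+1.-tuple bool) \sum_(q : n.+1.-tuple 'I_N.+1)
   jointS n s u x (map (@nat_of_ord _) q) * (nth false s n == s')%:R * F (map (@nat_of_ord _) q)
 = F (mkseq (fun k => Qlast (take k x)) n.+1) * Afw n u x s'.
Proof.
elim: n s' F => [|n IH] s' F hn.
  rewrite big_tuple_rcons big_tuple0 /=.
  transitivity (\sum_(a : bool) (a == s')%:R * ((a == false)%:R *
      \sum_(c : 'I_N.+1) (nat_of_ord c == 0%N)%:R * F [:: nat_of_ord c])).
    apply: eq_bigr => a _; rewrite big_tuple_rcons big_tuple0 mulr_sumr mulr_sumr.
    apply: eq_bigr => c _; rewrite /jointS big_geq // mulr1 natrA /=; ring.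
  by rewrite sum_bool_pick (@sum_ord_pick _ _ _ (fun v => F [:: v])) // mulrC /mkseq /= take0.
rewrite big_tuple_rcons.
pose Qn := mkseq (fun k => Qlast (take k x)) n.+1.
pose F' (r : bool) (qs : seq nat) := \sum_(c : 'I_N.+1)
   stepf n u x r s' (nth 0%N qs n) c * F (rcons qs c).
transitivity (\sum_(s0 : n.+1.-tuple bool) \sum_(q0 : n.+1.-tuple 'I_N.+1)
   jointS n s0 u x (map (@nat_of_ord _) q0) * F' (nth false s0 n) (map (@nat_of_ord _) q0)).
  apply: eq_bigr => s0 _.
  transitivity (\sum_(b : bool) (b == s')%:R * \sum_(q0 : n.+1.-tuple 'I_N.+1) \sum_(c : 'I_N.+1)
     jointS n s0 u x (map (@nat_of_ord _) q0) * stepf n u x (nth false s0 n) b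
        (nth 0%N (map (@nat_of_ord _) q0) n) c * F (rcons (map (@nat_of_ord _) q0) c)).
    apply: eq_bigr => b _; rewrite big_tuple_rcons mulr_sumr; apply: eq_bigr => q0 _.
    rewrite mulr_sumr; apply: eq_bigr => c _ /=.
    rewrite map_rcons jointS_rcons ?size_tuple ?size_map ?size_tuple //.
    rewrite nth_rcons size_tuple ltnn eqxx; ring.
  rewrite sum_bool_pick; apply: eq_bigr => q0 _; rewrite /F' mulr_sumr.
  by apply: eq_bigr => c _; ring.
transitivity (\sum_(r : bool) \sum_(s0 : n.+1.-tuple bool) \sum_(q0 : n.+1.-tuple 'I_N.+1)
   jointS n s0 u x (map (@nat_of_ord _) q0) * (nth false s0 n == r)%:R * F' r (map (@nat_of_ord _) q0)).
  rewrite [RHS]exchange_big; apply: eq_bigr => s0 _ /=.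
  rewrite [RHS]exchange_big; apply: eq_bigr => q0 _ /=.
  transitivity (\sum_(r : bool) (r == nth false s0 n)%:R * (jointS n s0 u x (map (@nat_of_ord _) q0) * F' r (map (@nat_of_ord _) q0))).
    by rewrite sum_bool_pick.
  by apply: eq_bigr => r _; rewrite eq_sym; ring.
under eq_bigr => r _ do rewrite IH ?(ltnW hn) //.
rewrite /= mulr_sumr; apply: eq_bigr => r _.
rewrite /F' nth_mkseq //.
transitivity (\sum_(c : 'I_N.+1) (nat_of_ord c == gU N (Qlast (take n x)) (nth false x n))%:R *
   (pol (take n u) (take n x) (nth false u n) * (nth false x n == fstrat (nth false u n) r)%:R
    * PU eta N s' (nth false x n) r (Qlast (take n x)) * Afw n u x r * F (rcons Qn c))).
  rewrite mulr_suml; apply: eq_bigr => c _; rewrite /stepf; ring.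
rewrite (@sum_ord_pick _ _ _ (fun v => _ * F (rcons Qn v))) ?gU_lt //.
rewrite [mkseq _ n.+2]mkseqS -/Qn /Qlast (take_nth false hn) foldl_rcons /=; ring.
Qed.


Definition Qseq n x := mkseq (fun k => Qlast (take k x)) n.+1.

Lemma sum_bool_one (v : bool) (c : R) : \sum_(b : bool) (v == b)%:R * c = c.
Proof. by rewrite big_bool; case: v => /=; rewrite mul1r mul0r ?addr0 ?add0r. Qed.

Lemma Pr_eq n E : Pr eta N pol n E = \sum_(u : n.-tuple bool) \sum_(x : n.-tuple bool)
   (E u x (Qseq n x))%:R * \sum_(s' : bool) Afw n u x s'.
Proof.
rewrite /Pr exchange_big; apply: eq_bigr => u _.
rewrite exchange_big; apply: eq_bigr => x _.
rewrite mulr_sumr.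
transitivity (\sum_(s' : bool) \sum_(s : n.+1.-tuple bool) \sum_(q : n.+1.-tuple 'I_N.+1)
   jointS n s u x (map (@nat_of_ord _) q) * (nth false s n == s')%:R
     * (fun qs => (E u x qs)%:R) (map (@nat_of_ord _) q)).
  rewrite [RHS]exchange_big; apply: eq_bigr => s _ /=.
  rewrite [RHS]exchange_big; apply: eq_bigr => q _ /=.
  rewrite -[LHS](sum_bool_one (nth false s n)); apply: eq_bigr => b _.
  by rewrite (joint_jointS n) /=; ring.
apply: eq_bigr => sp _; rewrite (@jsum n u x sp (fun qs => (E u x qs)%:R)) ?size_tuple // mulrC.
Qed.


Lemma Afw_ext j u1 u2 x1 x2 : take j u1 = take j u2 -> take j x1 = take j x2 ->
  forall s, Afw j u1 x1 s = Afw j u2 x2 s.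
Proof.
elim: j => [|j IH] hu hx s //=.
have hu' : take j u1 = take j u2.
  by rewrite -(@take_takel _ j j.+1) // hu take_takel.
have hx' : take j x1 = take j x2.
  by rewrite -(@take_takel _ j j.+1) // hx take_takel.
have hnu : nth false u1 j = nth false u2 j.
  by rewrite -(@nth_take j.+1) // hu nth_take.
have hnx : nth false x1 j = nth false x2 j.
  by rewrite -(@nth_take j.+1) // hx nth_take.
apply: eq_bigr => b _; by rewrite IH // hu' hx' hnu hnx.
Qed.

Lemma PU_sum x sp qp : \sum_(s' : bool) PU eta N s' x sp qp = 1.
Proof.
rewrite big_bool /PU /=; case: ifP => _ /=; first by rewrite addr0.
by rewrite /behc /= subrK.
Qed.

Definition Phi m (u x : seq bool) (a b : bool) : R :=
  \sum_(s : bool) Afw m u x s * pol u x a * (b == fstrat a s)%:R.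

Lemma take_rcons_size (T : Type) (s : seq T) a : take (size s) (rcons s a) = s.
Proof. by rewrite -cats1 take_size_cat. Qed.

Lemma Pr_split m E : Pr eta N pol m.+1 E =
  \sum_(u : m.-tuple bool) \sum_(a : bool) \sum_(x : m.-tuple bool) \sum_(b : bool)
   (E (rcons u a) (rcons x b) (Qseq m.+1 (rcons x b)))%:R * Phi m u x a b.
Proof.
rewrite Pr_eq big_tuple_rcons; apply: eq_bigr => u _; apply: eq_bigr => a _.
rewrite big_tuple_rcons; apply: eq_bigr => x _; apply: eq_bigr => b _ /=.
congr (_ * _); rewrite /Phi /=.
rewrite exchange_big; apply: eq_bigr => s _.
rewrite -mulr_sumr PU_sum mulr1.
have hu : take m (rcons u a) = u by move: (@take_rcons_size _ u a); rewrite size_tuple.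
have hx : take m (rcons x b) = x by move: (@take_rcons_size _ x b); rewrite size_tuple.
have hnu : nth false (rcons u a) m = a by rewrite nth_rcons size_tuple ltnn eqxx.
have hnx : nth false (rcons x b) m = b by rewrite nth_rcons size_tuple ltnn eqxx.
rewrite hu hx hnu hnx (@Afw_ext m (rcons u a) u (rcons x b) x) //.
  by rewrite hu -{2}(size_tuple u) take_size.
by rewrite hx -{2}(size_tuple x) take_size.
Qed.


Definition v0 (s' : bool) : R := behc eta s' true true.
Definition Lstep (a : bool) (v : bool -> R) (s' : bool) : R :=
  \sum_(s : bool) v s * (false == fstrat a s)%:R * behc eta s' false s.
Definition beta (us : seq bool) : bool -> R := foldl (fun v a => Lstep a v) v0 us.

Lemma PU_nomod s' x sp qp : (qp < N.-1)%N -> PU eta N s' x sp qp = behc eta s' x sp.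
Proof.
move=> h; rewrite /PU.
have -> : (qp == N.-1) || (qp == N) = false.
  apply/negbTE; rewrite negb_or; apply/andP; split; apply/eqP => e; move: h; rewrite e.
    by rewrite ltnn.
  by rewrite ltnNge leq_pred.
by [].
Qed.

Lemma Afw_beta u x l m :
  (0 < l)%N -> (l <= m)%N -> size u = m -> nth false u l.-1 = true ->
  (forall t, (l <= t < m)%N -> nth false x t = false /\ (Qlast (take t x) < N.-1)%N) ->
  (nth false x l.-1 = true \/ (nth false x l.-1 = false /\ (Qlast (take l.-1 x) < N.-1)%N)) ->
  forall j, (l <= j <= m)%N -> exists c, forall s, Afw j u x s = c * beta (take (j - l) (drop l u)) s.
Proof.
move=> hl0 hlm hsu hul hmid hxl.
elim=> [|j IH] /andP[hlj hjm].
  by move: (leq_trans hl0 hlj).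
case: (ltngtP l j.+1) hlj => // hlj _; last first.
  subst l; rewrite subnn take0 /=.
  move: hul hxl; rewrite /= => hul [hx | [hx hq]].
    exists (Afw j u x true * pol (take j u) (take j x) true) => s'.
    rewrite big_bool /= hul hx /= /PU /= /beta /= /v0.
    by rewrite mulr0 mul0r addr0 andbF mulr1.
  exists (Afw j u x false * pol (take j u) (take j x) true) => s'.
  rewrite big_bool /= hul hx /= /beta /= /v0.
  rewrite mulr0 mul0r add0r PU_nomod // /behc /=; ring.
have [c hc] : exists c, forall s, Afw j u x s = c * beta (take (j - l) (drop l u)) s.
  by apply: IH; rewrite -ltnS hlj ltnW.
have [hxj hqj] : nth false x j = false /\ (Qlast (take j x) < N.-1)%N by apply: hmid; rewrite -ltnS hlj.
exists (c * pol (take j u) (take j x) (nth false u j)) => s'.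
rewrite /=; under eq_bigr => s _ do rewrite hc hxj PU_nomod //.
have hj : (j - l < size (drop l u))%N by rewrite size_drop hsu; lia.
rewrite subSn // (take_nth false hj) /beta foldl_rcons -/(beta _) nth_drop subnKC //.
rewrite /Lstep !mulr_sumr; apply: eq_bigr => s _; ring.
Qed.


Lemma Qlast_rcons x b : Qlast (rcons x b) = gU N (Qlast x) b.
Proof. by rewrite /Qlast foldl_rcons. Qed.

Lemma Qlast_find x : has id x -> (find id (rev x) <= N)%N -> Qlast x = find id (rev x).
Proof.
elim/last_ind: x => [|x b IH] //.
rewrite rev_rcons Qlast_rcons has_rcons; case: b => //= hx hf.
rewrite IH // ?(ltnW hf) //; by rewrite /gU hf.
Qed.

Lemma Qlast_nseq r a : (a + r <= N)%N -> foldl (gU N) a (nseq r false) = (a + r)%N.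
Proof.
elim: r a => [|r IH] a h /=; first by rewrite addn0.
rewrite IH /gU; first by rewrite ifT ?addSnnS //; lia.
rewrite /gU ifT; lia.
Qed.

Lemma Qlast_dec x : (Qlast x < N)%N -> (Qlast x < size x)%N ->
  exists y, x = y ++ true :: nseq (Qlast x) false.
Proof.
elim/last_ind: x => [|x b IH] //.
rewrite Qlast_rcons size_rcons; case: b => /=.
  by move=> _ _; exists x; rewrite -cats1.
rewrite /gU; case: ifP => hq; last by rewrite ltnn.
move=> _; rewrite ltnS => hs; have [y hy] := IH hq hs.
exists y; rewrite {1}hy rcons_cat /= -cats1; congr (_ ++ _ :: _); by elim: (Qlast x) => //= n ->.
Qed.

Lemma Qz_take y r t : (size y < t)%N -> (t <= size y + r.+1)%N -> (r <= N)%N ->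
  Qlast (take t (y ++ true :: nseq r false)) = (t - (size y).+1)%N.
Proof.
move=> h1 h2 h3; rewrite take_cat ltnNge ltnW //=.
have -> : (t - size y = (t - (size y).+1).+1)%N by lia.
rewrite /= take_nseq; last by lia.
rewrite /Qlast foldl_cat /= Qlast_nseq //; lia.
Qed.

Lemma Qz_nth y r t : (size y <= t)%N ->
  nth false (y ++ true :: nseq r false) t = (t == size y).
Proof.
move=> h; rewrite nth_cat ltnNge h /=.
case e: (t - size y)%N => [|k] /=.
  have -> : t = size y by lia.
  by rewrite eqxx.
rewrite nth_nseq; case: ifP => _; apply/esym/eqP; lia.
Qed.


Lemma Fac m l qv uh' u' x' : (qv < N)%N -> (qv < m)%N -> (m - qv <= l <= m)%N ->
  nth false uh' l.-1 = true -> size uh' = m -> size u' = m -> size x' = m ->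
  drop l.-1 u' = drop l.-1 uh' -> Qlast x' = qv ->
  exists c, forall s, Afw m u' x' s = c * beta (drop l uh') s.
Proof.
move=> hqN hqm /andP[hl1 hl2] hul hsuh hsu hsx hdrop hQ.
have [y hy] : exists y, x' = y ++ true :: nseq qv false.
  by rewrite -hQ; apply: Qlast_dec; rewrite hQ ?hsx.
have hsy : size y = (m - qv - 1)%N.
  by move: hsx; rewrite hy size_cat /= size_nseq; lia.
have hl0 : (0 < l)%N by lia.
have hdl : drop l u' = drop l uh'.
  have e : l = (1 + l.-1)%N by lia.
  by rewrite e -!drop_drop hdrop.
have hul' : nth false u' l.-1 = true.
  by rewrite -[l.-1]addn0 -nth_drop hdrop nth_drop addn0.
have hmid : forall t, (l <= t < m)%N -> nth false x' t = false /\ (Qlast (take t x') < N.-1)%N.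
  move=> t /andP[ht1 ht2]; rewrite hy Qz_nth; last by lia.
  split; first by apply/eqP; lia.
  rewrite Qz_take; lia.
have hxl : nth false x' l.-1 = true \/ (nth false x' l.-1 = false /\ (Qlast (take l.-1 x') < N.-1)%N).
  rewrite hy Qz_nth; last by lia.
  case: (eqVneq l.-1 (size y)) => e; first by left.
  right; split => //; rewrite Qz_take; lia.
have hr : (l <= m <= m)%N by rewrite hl2 leqnn.
have [c hc] := @Afw_beta u' x' l m hl0 hl2 hsu hul' hmid hxl m hr.
exists c => s; rewrite hc; congr (_ * beta _ _).
by rewrite -hdl take_oversize // size_drop hsu.
Qed.


Lemma Pr_form m E (P : seq bool -> seq bool -> bool) ah (Xb : bool -> bool) :
  (forall (u' x' : m.-tuple bool) a b,
     E (rcons u' a) (rcons x' b) (Qseq m.+1 (rcons x' b)) = [&& Xb b, a == ah & P u' x']) ->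
  Pr eta N pol m.+1 E = \sum_(u' : m.-tuple bool) \sum_(x' : m.-tuple bool)
     (P u' x')%:R * \sum_(b : bool) (Xb b)%:R * Phi m u' x' ah b.
Proof.
move=> hE; rewrite Pr_split; apply: eq_bigr => u' _.
transitivity (\sum_(a : bool) (a == ah)%:R * \sum_(x' : m.-tuple bool)
     (P u' x')%:R * \sum_(b : bool) (Xb b)%:R * Phi m u' x' a b).
  apply: eq_bigr => a _; rewrite mulr_sumr; apply: eq_bigr => x' _.
  rewrite !mulr_sumr; apply: eq_bigr => b _; rewrite hE !natrA; ring.
by rewrite sum_bool_pick.
Qed.

Lemma ratio_eq (K a b : R) : 0 < K * b -> (K * a) / (K * b) = a / b.
Proof.
move=> h; have hK : K != 0 by apply: contraTneq h => ->; rewrite mul0r ltxx.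
by rewrite invfM mulrACA mulfV // mul1r.
Qed.

Lemma size_rcons_take (s : seq bool) n : size s = n.+1 -> s = rcons (take n s) (nth false s n).
Proof. by move=> h; rewrite -take_nth ?h // take_oversize ?h. Qed.


Lemma lemma6_aux (i : nat) (xh uh : seq bool) (l : nat) (xi : bool) :
  0 <= eta <= 1 -> (1 <= N)%N -> policy_ok pol ->
  (N.+1 <= i)%N -> size xh = i.-1 -> size uh = i ->
  has id (window N i xh) ->
  (kidx N i xh <= l <= i.-1)%N -> nth false uh l.-1 = true ->
  0 < Pr eta N pol i (evHist uh xh) ->
  0 < Pr eta N pol i (evTail i l uh (qwin N (window N i xh))) ->
  condP eta N pol i (evXi i xi) (evHist uh xh)
  = condP eta N pol i (evXi i xi) (evTail i l uh (qwin N (window N i xh))).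
Proof.
move=> heta hN hpol hi hsx hsu hhas /andP[hk1 hk2] hul hposL hposR.
case: i hi hsx hsu hhas hk1 hk2 hposL hposR => [|m] //= hi hsx hsu hhas hk1 hk2 hposL hposR.
set w := window N m.+1 xh in hhas hk1 hposR *.
have hw : xh = take (m - N) xh ++ w by rewrite cat_take_drop.
have hsw : size w = N by rewrite /w /window /= size_drop hsx; lia.
have hfw : (find id (rev w) < N)%N by rewrite -hsw -size_rev -has_find has_rev.
have hqv : qwin N w = Qlast xh.
  rewrite /qwin hhas Qlast_find.
  - by rewrite hw rev_cat find_cat has_rev hhas.
  - by rewrite hw has_cat hhas orbT.
  by rewrite hw rev_cat find_cat has_rev hhas ltnW.
set qv := qwin N w in hk1 hposR hqv *.
have hqN : (qv < N)%N by rewrite /qv /qwin hhas.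
have hqm : (qv < m)%N by lia.
have hk : kidx N m.+1 xh = (m - qv)%N by rewrite /kidx -/w -/qv; lia.
rewrite hk in hk1.
set uh' := take m uh; set ah := nth false uh m.
have huh : uh = rcons uh' ah by apply: size_rcons_take.
have hsuh : size uh' = m by rewrite /uh' size_take hsu ltnSn.
have hul' : nth false uh' l.-1 = true by rewrite /uh' nth_take ?hul //; lia.
pose PL (u' x' : seq bool) := (u' == uh') && (x' == xh).
pose PR (u' x' : seq bool) := (drop l.-1 u' == drop l.-1 uh') && (Qlast x' == qv).
have takeR : forall (x' : m.-tuple bool) b, take m (rcons x' b) = x'.
  by move=> x' b; move: (@take_rcons_size _ x' b); rewrite size_tuple.
have nthR : forall (x' : m.-tuple bool) b, nth false (rcons x' b) m = b.
  by move=> x' b; rewrite nth_rcons size_tuple ltnn eqxx.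
have dropS : forall (u' : seq bool) a, size u' = m -> drop l.-1 (rcons u' a) = rcons (drop l.-1 u') a.
  by move=> u' a hs; rewrite drop_rcons // hs; lia.
have dropR : forall (u' : m.-tuple bool) a, drop l.-1 (rcons u' a) = rcons (drop l.-1 u') a.
  by move=> u' a; rewrite dropS // size_tuple.
have QR : forall (x' : m.-tuple bool) b, nth 0%N (Qseq m.+1 (rcons x' b)) m = Qlast x'.
  by move=> x' b; rewrite /Qseq nth_mkseq // takeR.
have hE1 : forall (u' x' : m.-tuple bool) a b,
   (fun u x q => evXi m.+1 xi u x q && evHist uh xh u x q) (rcons u' a) (rcons x' b) (Qseq m.+1 (rcons x' b))
   = [&& b == xi, a == ah & PL u' x'].
  move=> u' x' a b /=; rewrite /evXi /evHist /= nthR huh eqseq_rcons hsx takeR /PL.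
  by case: (b == xi); case: (a == ah); rewrite /= ?andbF ?andbT.
have hE2 : forall (u' x' : m.-tuple bool) a b,
   evHist uh xh (rcons u' a) (rcons x' b) (Qseq m.+1 (rcons x' b))
   = [&& true, a == ah & PL u' x'].
  move=> u' x' a b /=; rewrite /evHist /= huh eqseq_rcons hsx takeR /PL.
  by case: (a == ah); rewrite /= ?andbF ?andbT.
have hE3 : forall (u' x' : m.-tuple bool) a b,
   (fun u x q => evXi m.+1 xi u x q && evTail m.+1 l uh qv u x q) (rcons u' a) (rcons x' b) (Qseq m.+1 (rcons x' b))
   = [&& b == xi, a == ah & PR u' x'].
  move=> u' x' a b /=; rewrite /evXi /evTail /= nthR huh dropR dropS // eqseq_rcons QR /PR.
  by case: (b == xi); case: (a == ah); rewrite /= ?andbF ?andbT.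
have hE4 : forall (u' x' : m.-tuple bool) a b,
   evTail m.+1 l uh qv (rcons u' a) (rcons x' b) (Qseq m.+1 (rcons x' b))
   = [&& true, a == ah & PR u' x'].
  move=> u' x' a b /=; rewrite /evTail /= huh dropR dropS // eqseq_rcons QR /PR.
  by case: (a == ah); rewrite /= ?andbF ?andbT.
rewrite /condP (@Pr_form m (fun u x q => evXi m.+1 xi u x q && evHist uh xh u x q) PL ah _ hE1).
rewrite (@Pr_form m (fun u x q => evXi m.+1 xi u x q && evTail m.+1 l uh qv u x q) PR ah _ hE3).
rewrite (@Pr_form m (evHist uh xh) PL ah (fun _ => true) hE2) in hposL *.
rewrite (@Pr_form m (evTail m.+1 l uh qv) PR ah (fun _ => true) hE4) in hposR *.
set bt := beta (drop l uh').
pose Psi b := \sum_(s : bool) bt s * (b == fstrat ah s)%:R.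
have hfac : forall u' x' : m.-tuple bool, PR u' x' ->
    exists c, forall b, Phi m u' x' ah b = c * Psi b.
  move=> u' x' /andP[/eqP hd /eqP hq].
  have [c hc] := @Fac m l qv uh' u' x' hqN hqm (introT andP (conj hk1 hk2)) hul' hsuh
     (size_tuple u') (size_tuple x') hd hq.
  exists (c * pol u' x' ah) => b; rewrite /Phi /Psi mulr_sumr.
  by apply: eq_bigr => s _; rewrite hc -/bt; ring.
set S := \sum_(b : bool) true%:R * Psi b.
have hsumc : forall (u' x' : m.-tuple bool) c, (forall b, Phi m u' x' ah b = c * Psi b) ->
    \sum_(b : bool) true%:R * Phi m u' x' ah b = c * S.
  move=> u' x' c hc; rewrite /S mulr_sumr; apply: eq_bigr => b _; rewrite hc; ring.
have hS : S != 0.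
  apply/eqP => hS0; move: hposR; rewrite big1 ?ltxx // => u' _; rewrite big1 // => x' _.
  case: (boolP (PR u' x')) => hP; last by rewrite mul0r.
  by have [c hc] := hfac u' x' hP; rewrite (hsumc u' x' c hc) hS0 !mulr0.
pose kap (u' x' : seq bool) := (\sum_(b : bool) true%:R * Phi m u' x' ah b) / S.
have hkap : forall u' x' : m.-tuple bool, PR u' x' -> forall b, Phi m u' x' ah b = kap u' x' * Psi b.
  move=> u' x' hP b; have [c hc] := hfac u' x' hP.
  by rewrite /kap (hsumc u' x' c hc) mulfK.
have hsumF : forall (P : seq bool -> seq bool -> bool) (Xb : bool -> bool),
    (forall u' x' : m.-tuple bool, P u' x' -> PR u' x') ->
    \sum_(u' : m.-tuple bool) \sum_(x' : m.-tuple bool) (P u' x')%:R * \sum_(b : bool) (Xb b)%:R * Phi m u' x' ah b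
    = (\sum_(u' : m.-tuple bool) \sum_(x' : m.-tuple bool) (P u' x')%:R * kap u' x') * \sum_(b : bool) (Xb b)%:R * Psi b.
  move=> P Xb hPR; rewrite mulr_suml; apply: eq_bigr => u' _.
  rewrite mulr_suml; apply: eq_bigr => x' _.
  case: (boolP (P u' x')) => hP; last by rewrite !mul0r.
  rewrite !mul1r mulr_sumr; apply: eq_bigr => b _; rewrite (hkap u' x' (hPR _ _ hP)); ring.
have hLR : forall u' x' : m.-tuple bool, PL u' x' -> PR u' x'.
  by move=> u' x' /andP[/eqP -> /eqP ->]; rewrite /PR eqxx -hqv eqxx.
have hRR : forall u' x' : m.-tuple bool, PR u' x' -> PR u' x' by [].
rewrite !(hsumF PL) // !(hsumF PR) //.
rewrite (hsumF PL) // in hposL; rewrite (hsumF PR) // in hposR.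
by rewrite !ratio_eq.
Qed.

End Main.

Theorem lemma6 (R : realFieldType) (eta : R) (N : nat)
    (pol : seq bool -> seq bool -> bool -> R)
    (i : nat) (xh uh : seq bool) (l : nat) (xi : bool) :
  0 <= eta <= 1 -> (1 <= N)%N -> policy_ok pol ->
  (N.+1 <= i)%N -> size xh = i.-1 -> size uh = i ->
  has id (window N i xh) ->
  (kidx N i xh <= l <= i.-1)%N -> nth false uh l.-1 = true ->
  0 < Pr eta N pol i (evHist uh xh) ->
  0 < Pr eta N pol i (evTail i l uh (qwin N (window N i xh))) ->
  condP eta N pol i (evXi i xi) (evHist uh xh)
  = condP eta N pol i (evXi i xi) (evTail i l uh (qwin N (window N i xh))).
Proof. exact: lemma6_aux. Qed.
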